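(* Let $n\ge 3$ and let $S_n$ be the star graph with vertices $a_1,\dots,a_n$ and center $a_1$. Then $$\liminf_{p\to\infty}\|M_{S_n}\|_p^p\geq \frac{1+\sqrt{n}}{2}.$$
   Context: For a finite connected graph $G=(V,E)$ with graph distance $d_G$ and $f:V\to\mathbb{R}$, $M_Gf(v)=\sup_{r\geq 0}\frac{1}{|B(v,r)|}\sum_{u\in B(v,r)}|f(u)|$, where $B(v,r)=\{u\in V: d_G(u,v)\le r\}$. For $g:V\to\mathbb{R}$, $\|g\|_p=(\sum_{v\in V}|g(v)|^p)^{1/p}$ and $\|M_G\|_p=\sup_{f\neq 0}\|M_Gf\|_p/\|f\|_p$. The star graph $S_n$ has edges exactly between $a_1$ and each $a_i$, $i\ge 2$. *)

(* Defs.v *)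
From HB Require Import structures.
From mathcomp Require Import all_boot all_order all_algebra.
From mathcomp Require Import all_classical all_reals all_analysis.
Set Implicit Arguments. Unset Strict Implicit. Unset Printing Implicit Defensive.
Import Order.TTheory GRing.Theory Num.Theory.
Local Open Scope ring_scope.

Section Graphs.
Variables (R : realType) (T : finType) (e : rel T).

Definition walk_len (u v : T) (k : nat) : bool :=
  [exists p : k.-tuple T, path e u p && (last u p == v)].

(* graph distance: least k with a walk of length k (for a connected graph on
   T any two vertices are joined by a walk of length < #|T|) *)
Definition gdist (u v : T) : nat := find (walk_len u v) (iota 0 #|T|).

Definition gball (v : T) (r : R) : {set T} :=
  [set u | (gdist u v)%:R <= r].

Definition maxop (f : T -> R) (v : T) : R :=
  sup [set (\sum_(u in gball v r) `|f u|) / #|gball v r|%:R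
      | r in [set r : R | 0 <= r]].

Definition lpnorm (p : R) (g : T -> R) : R :=
  powR (\sum_(v : T) powR `|g v| p) (p^-1).

Definition maxop_norm (p : R) : R :=
  sup [set lpnorm p (maxop f) / lpnorm p f
      | f in [set f : T -> R | f <> (fun=> 0)]].

End Graphs.

(* star graph S_n on vertices 'I_n (a_{i+1} <-> i); centre a_1 is vertex 0 *)
Definition star_adj (n : nat) : rel 'I_n :=
  fun i j => ((val i == 0%N) && (val j != 0%N)) || ((val j == 0%N) && (val i != 0%N)).

(* Main.v *)
Require Import Defs.
From mathcomp Require Import all_boot all_order all_algebra.
From mathcomp Require Import all_classical all_reals all_analysis.
From mathcomp Require Import ring lra.
Import Order.TTheory GRing.Theory Num.Theory numFieldTopology.Exports.
Local Open Scope ring_scope.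

Section Gen.
Variables (R : realType) (T : finType) (e : rel T).

Lemma avg_le (f : T -> R) (B : {set T}) m :
  (forall u, `|f u| <= m) -> 0 <= m ->
  (\sum_(u in B) `|f u|) / #|B|%:R <= m.
Proof.
move=> fm m0.
have [B0|Bpos] := eqVneq #|B| 0%N.
  by rewrite B0 invr0 mulr0.
rewrite ler_pdivrMr ?ltr0n ?lt0n //.
apply: (le_trans (y := \sum_(u in B) m)); first by apply: ler_sum => u _.
by rewrite sumr_const mulr_natr.
Qed.

Lemma avg_ge0 (f : T -> R) (B : {set T}) :
  0 <= (\sum_(u in B) `|f u|) / #|B|%:R.
Proof. by apply: divr_ge0 => //; apply: sumr_ge0. Qed.

Lemma maxop_le (f : T -> R) v m :
  (forall u, `|f u| <= m) -> 0 <= m -> maxop e f v <= m.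
Proof.
move=> fm m0; apply: ge_sup.
  by exists ((\sum_(u in gball e v (0:R)) `|f u|) / #|gball e v (0:R)|%:R); exists (0:R) => //=.
by move=> _ [r _ <-]; apply: avg_le.
Qed.

Lemma sum_ge1 (f : T -> R) u : `|f u| <= \sum_w `|f w|.
Proof.
rewrite (bigD1 u) //= lerDl; exact: sumr_ge0.
Qed.

Lemma maxop_ge (f : T -> R) v (r : R) : 0 <= r ->
  (\sum_(u in gball e v r) `|f u|) / #|gball e v r|%:R <= maxop e f v.
Proof.
move=> r0; apply: ub_le_sup; last by exists r.
exists (\sum_w `|f w|) => _ [s _ <-]; apply: avg_le => //; first exact: sum_ge1.
exact: sumr_ge0.
Qed.

Lemma maxop_ge0 (f : T -> R) v : 0 <= maxop e f v.
Proof. exact: (le_trans (avg_ge0 f (gball e v (0:R))) (@maxop_ge f v 0 (lexx (0:R)))). Qed.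

Lemma ratio_bound (p : R) f : 0 < p ->
  lpnorm p (maxop e f) / lpnorm p f <= (#|T|%:R : R) `^ p^-1.
Proof.
move=> p0.
have [L0|Lne] := eqVneq (lpnorm p f) 0.
  by rewrite L0 invr0 mulr0 powR_ge0.
case: (pickP (fun _ : T => true)) => [u0 _|none]; last first.
  by move: Lne; rewrite /lpnorm big_pred0 // powR0 ?eqxx // invr_eq0 gt_eqF.
case: (@arg_maxP _ R T u0 (fun _ => true) (fun u => `|f u|) isT) => u1 _ Hmax.
set m := `|f u1|.
have m0 : 0 <= m by exact: normr_ge0.
have Hm : forall u, `|f u| <= m by move=> u; apply: Hmax.
have Hpos : 0 < lpnorm p f by rewrite lt_def Lne powR_ge0.
have mle : m <= lpnorm p f.
  rewrite /lpnorm.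
  have -> : m = powR (powR m p) p^-1 by rewrite -powRrM mulfV ?gt_eqF // powRr1.
  have pi0 : 0 <= p^-1 by rewrite invr_ge0 ltW.
  apply: (ge0_ler_powR pi0); rewrite ?nnegrE ?powR_ge0 //.
    by apply: sumr_ge0 => *; exact: powR_ge0.
  rewrite (bigD1 u1) //= lerDl; apply: sumr_ge0 => *; exact: powR_ge0.
have Mle : lpnorm p (maxop e f) <= (#|T|%:R : R) `^ p^-1 * m.
  rewrite /lpnorm.
  apply: (le_trans (y := powR (\sum_(v:T) powR m p) p^-1)).
    have pi0 : 0 <= p^-1 by rewrite invr_ge0 ltW.
    apply: (ge0_ler_powR pi0); rewrite ?nnegrE.
    - by apply: sumr_ge0 => *; exact: powR_ge0.
    - by apply: sumr_ge0 => *; exact: powR_ge0.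
    apply: ler_sum => v _; apply: (ge0_ler_powR (ltW p0)); rewrite ?nnegrE //.
    rewrite ger0_norm ?maxop_ge0 //; exact: maxop_le.
  rewrite sumr_const (_ : #|_| = #|T|); last by apply: eq_card.
  rewrite -[_ *+ #|T|]mulr_natr powRM ?ler0n ?powR_ge0 // -powRrM mulfV ?gt_eqF // powRr1 //.
  by rewrite mulrC.
rewrite ler_pdivrMr //; apply: (le_trans Mle); apply: ler_wpM2l => //; exact: powR_ge0.
Qed.

Lemma maxop_norm_ge (p : R) f : 0 < p -> f <> (fun=> 0) ->
  lpnorm p (maxop e f) / lpnorm p f <= maxop_norm e p.
Proof.
move=> p0 fn0; apply: ub_le_sup; last by exists f.
by exists ((#|T|%:R : R) `^ p^-1) => _ [g _ <-]; exact: ratio_bound.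
Qed.

End Gen.
Section Dist.
Variables (T : finType) (e : rel T).

Lemma walk0 u v : walk_len e u v 0 = (u == v).
Proof.
apply/existsP/eqP => [[t]|->].
  by rewrite tuple0 /= => /eqP.
by exists [tuple]; rewrite /= eqxx.
Qed.

Lemma walk1 u v : walk_len e u v 1 = e u v.
Proof.
apply/existsP/idP => [[t]|h].
  by case: t => [[|x [|]] //= _]; rewrite andbT => /andP[h /eqP <-].
by exists [tuple v]; rewrite /= h eqxx.
Qed.

Lemma gdist_le0 u v : (0 < #|T|)%N -> (gdist e u v <= 0)%N = (u == v).
Proof.
rewrite /gdist; case: #|T| => // N _.
by rewrite /= walk0; case: (u == v).
Qed.

Lemma gdist_le1 u v : (1 < #|T|)%N -> (gdist e u v <= 1)%N = (u == v) || e u v.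
Proof.
rewrite /gdist; case: #|T| => [|[|N]] // _.
by rewrite /= walk0 walk1; case: (u == v); case: (e u v).
Qed.

End Dist.

Section Star.
Variables (R : realType) (n : nat) (hn : (3 <= n)%N).

Let n0 : (0 < n)%N. Proof. exact: leq_trans hn. Qed.
Let n1 : (1 < n)%N. Proof. exact: leq_trans hn. Qed.
Let c0 : 'I_n := Ordinal n0.

Lemma eq_c0 (u : 'I_n) : (u == c0) = (val u == 0%N).
Proof. by []. Qed.

Lemma ball_center : gball (@star_adj n) c0 (0:R) = [set c0].
Proof.
apply/setP => u; rewrite !inE -[0 : R]/(0%:R) ler_nat gdist_le0 //.
by rewrite card_ord.
Qed.

Lemma ball_leaf (i : 'I_n) : val i != 0%N ->
  gball (@star_adj n) i (1:R) = [set i; c0].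
Proof.
move=> hi; apply/setP => u; rewrite !inE -[1 : R]/(1%:R) ler_nat gdist_le1 ?card_ord //.
by rewrite /star_adj eq_c0 (negbTE hi) /= andbT orbF.
Qed.

Lemma sum_star (A B : R) :
  \sum_(v : 'I_n) (if val v == 0%N then A else B) = A + B *+ n.-1.
Proof.
rewrite (bigD1 c0) //= ; congr (_ + _).
rewrite (eq_bigr (fun _ => B)); last by move=> v; rewrite -eq_c0 => /negbTE ->.
by rewrite sumr_const cardC1 card_ord.
Qed.

Lemma key (p : R) : 0 < p ->
  ((1 + Num.sqrt (n%:R : R)) / 2) `^ p^-1 <= maxop_norm (@star_adj n) p.
Proof.
move=> p0.
set s := Num.sqrt (n%:R : R).
have s0 : 0 <= s by exact: sqrtr_ge0.
set u := 1 + s.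
have u0 : 0 < u by rewrite /u; lra.
set b := u `^ p^-1.
have b0 : 0 < b by exact: powR_gt0.
set a := b * b.
have a0 : 0 < a by exact: mulr_gt0.
pose f0 : 'I_n -> R := fun i => if val i == 0%N then a else 1.
have f0ne : f0 <> (fun=> 0).
  by move=> /(congr1 (fun g => g c0)); rewrite /f0 /= => ha; move: a0; rewrite ha ltxx.
have bp : b `^ p = u by rewrite -powRrM mulVf ?gt_eqF // powRr1 // ltW.
have ap : a `^ p = u * u by rewrite powRM ?bp // ltW.
apply: le_trans (@maxop_norm_ge R _ (@star_adj n) p f0 p0 f0ne).
rewrite /lpnorm.
set X := \sum_v _. set Y := \sum_v _.
have Yv : Y = u * u + 1 *+ n.-1.
  rewrite -sum_star; apply: eq_bigr => v _; rewrite /f0; case: ifP => _.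
    by rewrite ger0_norm ?ap // ltW.
  by rewrite normr1 powR1.
have Xv : u * u + u *+ n.-1 <= X.
  rewrite -sum_star; apply: ler_sum => v _; case: ifP => hv.
    have -> : v = c0 by apply/eqP; rewrite eq_c0.
    rewrite -ap; apply: (ge0_ler_powR (ltW p0)); rewrite ?nnegrE; [exact: ltW | exact: normr_ge0|].
    rewrite ger0_norm ?maxop_ge0 //.
    apply: le_trans (@maxop_ge R _ (@star_adj n) f0 c0 0 (lexx 0)).
    by rewrite ball_center big_set1 cards1 divr1 /f0 /= ger0_norm // ltW.
  rewrite -bp; apply: (ge0_ler_powR (ltW p0)); rewrite ?nnegrE; [exact: ltW | exact: normr_ge0|].
  rewrite ger0_norm ?maxop_ge0 //.
  apply: le_trans (@maxop_ge R _ (@star_adj n) f0 v 1 ler01).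
  have hv' : v \notin [set c0] by rewrite inE eq_c0 hv.
  rewrite ball_leaf ?hv // big_setU1 //= big_set1 cards2 eq_c0 hv /f0 hv /=.
  rewrite normr1 (ger0_norm (ltW a0)).
  have h : 0 <= (b - 1) ^+ 2 by exact: sqr_ge0.
  rewrite ler_pdivlMr // /a; nra.
have Y0 : 0 < Y.
  rewrite Yv; have h1 : 0 <= (n.-1)%:R :> R by exact: ler0n.
  have h2 : 0 < u * u by exact: mulr_gt0.
  lra.
have uh : 0 <= u / 2 by apply: divr_ge0 => //; exact: ltW.
rewrite ler_pdivlMr ?powR_gt0 //.
rewrite -powRM //; last exact: ltW.
have pi0 : 0 <= p^-1 by rewrite invr_ge0 ltW.
have hY' : 0 <= u / 2 * Y by apply: mulr_ge0 => //; exact: ltW.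
have hX' : 0 <= X by apply: sumr_ge0 => *; exact: powR_ge0.
have hle : u / 2 * Y <= X.
  apply: le_trans Xv; rewrite Yv.
  have hn1 : (n.-1)%:R = s ^+ 2 - 1 :> R.
    by rewrite sqr_sqrtr ?ler0n // -(prednK n0) -natr1 prednK // addrK.
  rewrite -[u *+ _]mulr_natr hn1 /u.
  by rewrite le_eqVlt; apply/orP; left; apply/eqP; field.
exact: (ge0_ler_powR pi0 hY' hX' hle).
Qed.
End Star.

Theorem lemma3p4 (R : realType) (n : nat) (hn : (3 <= n)%N) :
  (((1 + Num.sqrt (n%:R : R)) / 2)%:E <=
   limf_einf (fun p : R => (powR (maxop_norm (@star_adj n) p) p)%:E)
             (pinfty_nbhs R))%E.
Proof.
rewrite limf_einfE.
apply: le_ereal_sup_tmp.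
exists (ereal_inf (image (fun p : R => 0 < p)
           (fun p : R => (powR (maxop_norm (@star_adj n) p) p)%:E))).
  exists (fun p : R => 0 < p) => //.
  by exists 0; split => //; exact: real0.
apply: le_ereal_inf_tmp => _ [p p0 <-]; rewrite lee_fin.
set c := (1 + Num.sqrt (n%:R : R)) / 2.
have c0 : 0 <= c.
  by apply: divr_ge0 => //; apply: addr_ge0 => //; exact: sqrtr_ge0.
have hk := @key R n hn p p0.
have -> : c = (c `^ p^-1) `^ p by rewrite -powRrM mulVf ?gt_eqF // powRr1.
have h1 : 0 <= c `^ p^-1 by exact: powR_ge0.
exact: (ge0_ler_powR (ltW p0) h1 (le_trans h1 hk) hk).
Qed.
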